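(* Let $X$ be a Banach space and let $\alpha$ be a left tensorial norm on $\ell_\infty\otimes X$. Then there exist a Banach lattice $L$ and a linear isometry $J\colon X\to L$ such that for all $k\in\mathbb{N}$ and all $y_1,\dots,y_k\in X$, $$\Big\|\bigvee_{j=1}^k |Jy_j|\Big\|_L=\alpha\Big(\sum_{j=1}^k e_j\otimes y_j\Big).$$
   Context: All spaces are real. $(e_j)$ denotes the unit vector basis of $c_0\subseteq\ell_\infty$. A norm $\alpha$ on $Y\otimes X$ ($Y,X$ Banach spaces) is a crossnorm if $\alpha(y\otimes x)=\|y\|\|x\|$; it is called left tensorial if it is a crossnorm and for every bounded operator $T\colon Y\to Y$ the operator $T\otimes I_X$ is bounded on $(Y\otimes X,\alpha)$ with $\|T\otimes I_X\|\le\|T\|$, where $I_X$ is the identity of $X$. $\bigvee$ denotes the lattice supremum and $|\cdot|$ the lattice modulus. *)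

(* Defs.v *)
From HB Require Import structures.
From mathcomp Require Import all_boot all_order all_algebra.
From mathcomp Require Import all_classical all_reals all_analysis.
Set Implicit Arguments. Unset Strict Implicit. Unset Printing Implicit Defensive.
Import Order.TTheory GRing.Theory Num.Theory.
Import numFieldNormedType.Exports.
Local Open Scope classical_set_scope.
Local Open Scope ring_scope.

Definition linf_bounded {R : realType} (y : nat -> R) : Prop :=
  exists M : R, forall n, `|y n| <= M.

Definition linf_norm {R : realType} (y : nat -> R) : R :=
  sup (range (fun n => `|y n|)).

(* unit vector e_j of c_0 (indices start at 0) *)
Definition unit_vec {R : realType} (j : nat) : nat -> R :=
  fun n => if n == j then 1 else 0.

Definition linf_bounded_op {R : realType} (T : (nat -> R) -> (nat -> R)) : Prop :=
  (forall y, linf_bounded y -> linf_bounded (T y)) /\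
  (forall (a : R) y z, linf_bounded y -> linf_bounded z ->
     T (fun n => a * y n + z n) = (fun n => a * T y n + T z n)) /\
  (exists C : R, forall y, linf_bounded y -> linf_norm (T y) <= C * linf_norm y).

Definition linf_opnorm {R : realType} (T : (nat -> R) -> (nat -> R)) : R :=
  inf [set C : R | 0 <= C /\
        forall y, linf_bounded y -> linf_norm (T y) <= C * linf_norm y].

(* ---------- the algebraic tensor product l_infinity (x) X ----------
   An elementary-tensor sum  sum_i y_i (x) x_i  is represented by the
   X-valued sequence  n |-> sum_i y_i(n) x_i ; this canonical map from
   l_infinity (x) X into X^N is injective, so l_infinity (x) X is identified
   with its image. *)
Definition tensor_of {R : realType} {X : normedModType R} (m : nat)
  (ys : nat -> nat -> R) (xs : nat -> X) : nat -> X :=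
  fun n => \sum_(i < m) ys i n *: xs i.

Definition is_tensor {R : realType} {X : normedModType R} (u : nat -> X) : Prop :=
  exists m (ys : nat -> nat -> R) (xs : nat -> X),
    (forall i, linf_bounded (ys i)) /\ u = tensor_of m ys xs.

Definition tensor_norm {R : realType} {X : normedModType R}
  (alpha : (nat -> X) -> R) : Prop :=
  (forall u, is_tensor u -> 0 <= alpha u) /\
  (forall u, is_tensor u -> alpha u = 0 -> u = (fun _ => 0)) /\
  (forall u v, is_tensor u -> is_tensor v ->
      alpha (fun n => u n + v n) <= alpha u + alpha v) /\
  (forall (a : R) u, is_tensor u -> alpha (fun n => a *: u n) = `|a| * alpha u).

Definition crossnorm {R : realType} {X : normedModType R}
  (alpha : (nat -> X) -> R) : Prop :=
  tensor_norm alpha /\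
  forall (y : nat -> R) (x : X), linf_bounded y ->
    alpha (fun n => y n *: x) = linf_norm y * `|x|.

Definition left_tensorial {R : realType} {X : normedModType R}
  (alpha : (nat -> X) -> R) : Prop :=
  crossnorm alpha /\
  forall T : (nat -> R) -> (nat -> R), linf_bounded_op T ->
  forall m (ys : nat -> nat -> R) (xs : nat -> X),
    (forall i, linf_bounded (ys i)) ->
    alpha (tensor_of m (fun i => T (ys i)) xs)
      <= linf_opnorm T * alpha (tensor_of m ys xs).

Record banach_lattice (R : realType) := BanachLattice {
  bl_carrier :> completeNormedModType R;
  bl_le : bl_carrier -> bl_carrier -> Prop;
  bl_join : bl_carrier -> bl_carrier -> bl_carrier;
  bl_le_refl : forall x, bl_le x x;
  bl_le_anti : forall x y, bl_le x y -> bl_le y x -> x = y;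
  bl_le_trans : forall x y z, bl_le x y -> bl_le y z -> bl_le x z;
  bl_le_add : forall x y z, bl_le x y -> bl_le (x + z) (y + z);
  bl_le_scale : forall (a : R) x y, 0 <= a -> bl_le x y -> bl_le (a *: x) (a *: y);
  bl_join_l : forall x y, bl_le x (bl_join x y);
  bl_join_r : forall x y, bl_le y (bl_join x y);
  bl_join_least : forall x y z, bl_le x z -> bl_le y z -> bl_le (bl_join x y) z;
  bl_norm_mono : forall x y,
    bl_le (bl_join x (- x)) (bl_join y (- y)) -> `|x| <= `|y|
}.

Definition bl_abs {R : realType} (L : banach_lattice R) (x : L) : L :=
  bl_join x (- x).

Fixpoint bl_sup_upto {R : realType} (L : banach_lattice R) (f : nat -> L) (k : nat) : L :=
  match k with
  | 0 => f 0%N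
  | k'.+1 => bl_join (bl_sup_upto f k') (f k)
  end.

Definition linear_isometry {R : realType} {X Y : normedModType R} (J : X -> Y) : Prop :=
  (forall (a : R) x y, J (a *: x + y) = a *: J x + J y) /\
  (forall x, `|J x| = `|x|).

(* Main.v *)
Require Import Defs.
From HB Require Import structures.
From mathcomp Require Import all_boot all_order all_algebra.
From mathcomp Require Import all_classical all_reals all_analysis.
Import Order.TTheory GRing.Theory Num.Theory.
Import numFieldNormedType.Exports.
Local Open Scope classical_set_scope.
Local Open Scope ring_scope.

Section Hahn.
Variables (R : realType) (V : lmodType R).

Definition sublin (q : V -> R) :=
  (forall x y, q (x + y) <= q x + q y) /\
  (forall (t : R) x, 0 <= t -> q (t *: x) = t * q x).

Lemma sublin0 q : sublin q -> q 0 = 0.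
Proof. by move=> [_ h]; rewrite -(scale0r (0:V)) h // mul0r. Qed.

Lemma sublin_lb q x : sublin q -> - q (- x) <= q x.
Proof.
move=> hq; have := hq.1 x (- x); rewrite subrr sublin0 //.
by rewrite -lerBlDr sub0r.
Qed.

Definition shS (q : V -> R) a x : set R :=
  [set r | exists2 t : R, 0 <= t & r = q (x + t *: a) - t * q a].

Definition shift (q : V -> R) a x := inf (shS q a x).

Lemma shS_lb q a x : sublin q -> lbound (shS q a x) (- q (- x)).
Proof.
move=> hq r [t t0 ->]; rewrite lerBrDr addrC lerBlDr.
have := hq.1 (x + t *: a) (- x).
by rewrite [x + _]addrC addrK (hq.2 _ _ t0).
Qed.

Lemma shS_has q a x : sublin q -> has_lbound (shS q a x).
Proof. by move=> hq; exists (- q (- x)); apply: shS_lb. Qed.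

Lemma shift_le_t q a x t : sublin q -> 0 <= t ->
  shift q a x <= q (x + t *: a) - t * q a.
Proof. by move=> hq t0; apply: ge_inf; [apply: shS_has | exists t]. Qed.

Lemma shift_ge q a x c : sublin q ->
  (forall t, 0 <= t -> c <= q (x + t *: a) - t * q a) -> c <= shift q a x.
Proof.
move=> hq h; apply: lb_le_inf; first by exists (q (x + 0 *: a) - 0 * q a), 0.
by move=> r [t t0 ->]; apply: h.
Qed.

Lemma shift_le q a x : sublin q -> shift q a x <= q x.
Proof.
by move=> hq; have := shift_le_t _ a x _ hq (lexx 0); rewrite scale0r addr0 mul0r subr0.
Qed.

Lemma shift_lb q a x : sublin q -> - q (- x) <= shift q a x.
Proof. by move=> hq; apply: shift_ge => // t t0; apply: shS_lb => //; exists t. Qed.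

Lemma shift_sublin q a : sublin q -> sublin (shift q a).
Proof.
move=> hq; split.
  move=> x y.
  have key : forall t u, 0 <= t -> 0 <= u -> shift q a (x + y) <=
      (q (x + t *: a) - t * q a) + (q (y + u *: a) - u * q a).
    move=> t u t0 u0; apply: le_trans (shift_le_t _ a (x + y) _ hq (addr_ge0 t0 u0)) _.
    rewrite addrACA -opprD -mulrDl lerD2r.
    have -> : x + y + (t + u) *: a = (x + t *: a) + (y + u *: a).
      by rewrite scalerDl addrACA.
    exact: hq.1.
  rewrite -lerBlDr; apply: (@shift_ge q a x _ hq) => t t0.
  rewrite lerBlDr [_ + shift q a y]addrC -lerBlDr.
  apply: (@shift_ge q a y _ hq) => u u0.
  by rewrite lerBlDr [_ + (_ - _)]addrC; apply: key.
have hom : forall s x, 0 < s -> s * shift q a x <= shift q a (s *: x).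
  move=> s x s0; apply: shift_ge => // t t0.
  have E : q (s *: x + t *: a) - t * q a =
      s * (q (x + (s^-1 * t) *: a) - (s^-1 * t) * q a).
    rewrite mulrBr -(hq.2 s _ (ltW s0)) scalerDr scalerA mulrA mulfV ?gt_eqF //.
    by rewrite !mulrA mulfV ?gt_eqF // mul1r.
  rewrite E ler_pM2l //; apply: shift_le_t => //.
  by rewrite mulr_ge0 // invr_ge0 ltW.
move=> s x; rewrite le_eqVlt => /orP[/eqP <-|s0].
  rewrite !scale0r mul0r; apply/eqP; rewrite eq_le; apply/andP; split.
    by apply: le_trans (shift_le _ _ _ hq) _; rewrite sublin0.
  by apply: le_trans (shift_lb _ _ _ hq); rewrite oppr0 sublin0 // oppr0.
apply/eqP; rewrite eq_le hom // andbT.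
have := hom s^-1 (s *: x); rewrite invr_gt0 => /(_ s0).
by rewrite scalerA mulVf ?gt_eqF // scale1r ler_pdivrMl // mulrC.
Qed.

Section Min.
Variable q0 : V -> R.
Hypothesis hq0 : sublin q0.

Definition Sub := {q : V -> R | sublin q /\ forall x, q x <= q0 x}.
Definition Rel (q1 q2 : Sub) : bool := `[< forall x, sval q2 x <= sval q1 x >].

Lemma minimal_exists : exists t : Sub, forall s : Sub, Rel t s -> Rel s t.
Proof.
have t0 : Sub by exists q0.
apply: (@ZL_preorder _ t0 Rel).
- by move=> t; apply/asboolP.
- move=> r s t /asboolP h1 /asboolP h2; apply/asboolP => x.
  exact: le_trans (h2 x) (h1 x).
move=> A Atot.
have [->|/set0P[a0 Aa0]] := eqVneq A set0; first by exists t0 => s.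
pose m x := inf [set sval q x | q in A].
have lbm : forall x, has_lbound [set sval q x | q in A].
  move=> x; exists (- q0 (- x)) => _ [q _ <-].
  apply: le_trans (sublin_lb _ x (proj2_sig q).1).
  by rewrite lerN2; apply: (proj2_sig q).2.
have nem : forall x, [set sval q x | q in A] !=set0.
  by move=> x; exists (sval a0 x), a0.
have mle : forall q x, A q -> m x <= sval q x.
  by move=> q x Aq; apply: ge_inf => //; exists q.
have mge : forall c x, (forall q, A q -> c <= sval q x) -> c <= m x.
  by move=> c x h; apply: lb_le_inf => // _ [q Aq <-]; apply: h.
have msub : sublin m.
  split.
    move=> x y; apply/ler_addgt0Pr => e e0.
    have e20 : 0 < e / 2 by rewrite divr_gt0.
    have [_ [q1 A1 <-] h1] := inf_adherent e20 (conj (nem x) (lbm x)).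
    have [_ [q2 A2 <-] h2] := inf_adherent e20 (conj (nem y) (lbm y)).
    have E : m x + m y + e = (m x + e / 2) + (m y + e / 2).
      by rewrite addrACA -splitr.
    rewrite E; case: (Atot _ _ A1 A2) => /asboolP h.
    + apply: le_trans (mle _ _ A2) _.
      apply: le_trans ((proj2_sig q2).1.1 x y) _.
      by apply: lerD; [apply: le_trans (h x) (ltW h1) | apply: ltW].
    + apply: le_trans (mle _ _ A1) _.
      apply: le_trans ((proj2_sig q1).1.1 x y) _.
      by apply: lerD; [apply: ltW | apply: le_trans (h y) (ltW h2)].
  have hom : forall s x, 0 < s -> s * m x <= m (s *: x).
    move=> s x s0; apply: mge => q Aq.
    by rewrite ((proj2_sig q).1.2 s x (ltW s0)) ler_pM2l // mle.
  move=> s x; rewrite le_eqVlt => /orP[/eqP <-|s0].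
    rewrite !scale0r mul0r; apply/eqP; rewrite eq_le; apply/andP; split.
      by apply: le_trans (mle _ _ Aa0) _; rewrite sublin0 //; exact: (proj2_sig a0).1.
    by apply: mge => q Aq; rewrite sublin0 //; exact: (proj2_sig q).1.
  apply/eqP; rewrite eq_le hom // andbT.
  have := hom s^-1 (s *: x); rewrite invr_gt0 => /(_ s0).
  by rewrite scalerA mulVf ?gt_eqF // scale1r ler_pdivrMl // mulrC.
have mq0 : forall x, m x <= q0 x.
  by move=> x; apply: le_trans (mle _ _ Aa0) _; apply: (proj2_sig a0).2.
exists (exist _ m (conj msub mq0)) => s As; apply/asboolP => x /=.
exact: mle.
Qed.

End Min.

Definition lfun_ax (f : V -> R) := forall (c : R) x z, f (c *: x + z) = c * f x + f z.

Lemma hahn_banach (p : V -> R) (y : V) : sublin p ->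
  exists f : V -> R, lfun_ax f /\ (forall x, f x <= p x) /\ f y = p y.
Proof.
move=> hp; pose q0 := shift p y.
have hq0 : sublin q0 by apply: shift_sublin.
have [[f [fs fq]] fmin] := @minimal_exists q0 hq0.
have add : forall x a, f (x + a) = f x + f a.
  move=> x a; apply/eqP; rewrite eq_le fs.1 /=.
  have sa : sublin (shift f a) by apply: shift_sublin.
  have sle : forall x, shift f a x <= q0 x.
    by move=> z; apply: le_trans (shift_le _ _ _ fs) (fq z).
  have := fmin (exist _ (shift f a) (conj sa sle)).
  have H : @Rel q0 (exist _ f (conj fs fq)) (exist _ (shift f a) (conj sa sle)).
    by apply/asboolP => z /=; apply: shift_le.
  move=> /(_ H) /asboolP /(_ x) /= h.
  have := le_trans h (shift_le_t _ a x _ fs (ler01)).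
  by rewrite scale1r mul1r lerBrDr.
have f0 : f 0 = 0 by apply: sublin0.
have fN : forall x, f (- x) = - f x.
  by move=> x; apply/eqP; rewrite -addr_eq0 -add addNr f0.
have fZ : forall (c : R) x, f (c *: x) = c * f x.
  move=> c x; have [c0|c0] := leP 0 c; first by rewrite fs.2.
  have c0' : 0 <= - c by rewrite oppr_ge0 ltW.
  by rewrite -[in LHS](opprK c) scaleNr fN (fs.2 _ _ c0') mulNr opprK.
exists f; split; first by move=> c x z; rewrite add fZ.
have fp : forall x, f x <= p x.
  by move=> x; apply: le_trans (fq x) _; apply: shift_le.
split=> //; apply/eqP; rewrite eq_le fp /=.
have := le_trans (fq (- y)) (shift_le_t _ y (- y) _ hp ler01).
by rewrite scale1r mul1r addNr sublin0 // sub0r fN lerN2.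
Qed.

End Hahn.
Arguments sublin {R V} q.
Arguments lfun_ax {R V} f.
Arguments hahn_banach {R V} p y _.


Section Alpha.
Variables (R : realType) (X : normedModType R) (alpha : (nat -> X) -> R).

Definition aa (m : nat) (y : nat -> X) : R :=
  alpha (tensor_of m (fun i => unit_vec i) y).

Lemma unit_vec_bnd i : linf_bounded (@unit_vec R i).
Proof. by exists 1 => n; rewrite /unit_vec; case: (n == i); rewrite ?normr1 ?normr0. Qed.

Lemma tensor_unitE m (v : nat -> X) n :
  \sum_(i < m) unit_vec i n *: v i = if (n < m)%N then v n else 0.
Proof.
elim: m => [|m IH]; first by rewrite big_ord0.
rewrite big_ord_recr /= IH /unit_vec.
case: (ltngtP n m) => [nm|mn|->].
- by rewrite scale0r addr0 (ltn_trans nm (ltnSn m)).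
- by rewrite scale0r addr0 ltnS leqNgt mn.
- by rewrite ltnSn add0r scale1r.
Qed.

Lemma tensorE m (v : nat -> X) :
  tensor_of m (fun i => unit_vec i) v = fun n => if (n < m)%N then v n else 0.
Proof. by apply/funext => n; rewrite /tensor_of tensor_unitE. Qed.

Lemma is_tensor_unit m (v : nat -> X) : is_tensor (tensor_of m (fun i => @unit_vec R i) v).
Proof. by exists m, (fun i => unit_vec i), v; split=> // i; apply: unit_vec_bnd. Qed.

Hypothesis halpha : left_tensorial alpha.

Lemma aa_ge0 m v : 0 <= aa m v.
Proof. by apply: halpha.1.1.1; apply: is_tensor_unit. Qed.

Lemma linf_norm_ge0 (y : nat -> R) : linf_bounded y -> 0 <= linf_norm y.
Proof.
move=> [M hM]; apply: le_trans (normr_ge0 (y 0%N)) _.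
by apply: ub_le_sup; [exists M => _ [n _ <-] | exists 0%N].
Qed.

Lemma linf_norm_ub (y : nat -> R) n : linf_bounded y -> `|y n| <= linf_norm y.
Proof. by move=> [M hM]; apply: ub_le_sup; [exists M => _ [k _ <-] | exists n]. Qed.

Lemma linf_norm_le (y : nat -> R) c : (forall n, `|y n| <= c) -> linf_norm y <= c.
Proof. by move=> h; apply: ge_sup; [exists `|y 0%N|, 0%N | move=> _ [n _ <-]]. Qed.

Lemma aa1 (v : nat -> X) : aa 1 v = `|v 0%N|.
Proof.
rewrite /aa.
have -> : tensor_of 1 (fun i => unit_vec i) v = (fun n => unit_vec 0 n *: v 0%N).
  by apply/funext => n; rewrite /tensor_of big_ord1.
rewrite halpha.1.2; last by apply: unit_vec_bnd.
suff -> : linf_norm (@unit_vec R 0) = 1 by rewrite mul1r.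
apply/eqP; rewrite eq_le; apply/andP; split.
  by apply: linf_norm_le => n; rewrite /unit_vec; case: (n == 0)%N; rewrite ?normr1 ?normr0.
by have := linf_norm_ub _ 0 (unit_vec_bnd 0); rewrite /unit_vec eqxx normr1.
Qed.

Lemma aa0 v : aa 0 v = 0.
Proof.
rewrite /aa.
have h := halpha.1.1.2.2.2 0 _ (is_tensor_unit 0 v).
rewrite normr0 mul0r in h; rewrite -h; congr alpha; apply/funext => n.
by rewrite scale0r /tensor_of big_ord0.
Qed.

Lemma aa_mono k y m z (f : nat -> nat) (c : nat -> R) :
  (forall n, (n < k)%N -> (f n < m)%N /\ `|c n| <= 1 /\ y n = c n *: z (f n)) ->
  aa k y <= aa m z.
Proof.
move=> H.
pose T := fun (t : nat -> R) n => if (n < k)%N then c n * t (f n) else 0.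
have Tn : forall t n, `|T t n| <= `|t (f n)|.
  move=> t n; rewrite /T; case: ifP => nk; last by rewrite normr0.
  by rewrite normrM ler_piMl // (H n nk).2.1.
have Tb : forall t, linf_bounded t -> linf_norm (T t) <= linf_norm t.
  move=> t tb; apply: linf_norm_le => n.
  exact: le_trans (Tn t n) (linf_norm_ub _ _ tb).
have hT : linf_bounded_op T.
  split; first by move=> t [M hM]; exists M => n; exact: le_trans (Tn t n) (hM _).
  split.
    move=> a y1 z1 _ _; apply/funext => n; rewrite /T.
    by case: ifP => _; rewrite ?mulr0 ?addr0 // mulrDr mulrCA.
  by exists 1 => t tb; rewrite mul1r; apply: Tb.
have opn : linf_opnorm T <= 1.
  apply: ge_inf; last by split=> //; move=> t tb; rewrite mul1r; apply: Tb.
  by exists 0 => C [].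
have := halpha.2 T hT m (fun i => unit_vec i) z unit_vec_bnd.
have -> : tensor_of m (fun i => T (unit_vec i)) z = tensor_of k (fun i => unit_vec i) y.
  rewrite tensorE; apply/funext => n; rewrite /tensor_of /T.
  case: ifP => nk.
    have [fm [_ ->]] := H n nk.
    under eq_bigr do rewrite -scalerA.
    by rewrite -scaler_sumr tensor_unitE fm.
  by rewrite big1 // => i _; rewrite scale0r.
move=> h; apply: le_trans h _.
by rewrite -[leRHS]mul1r ler_wpM2r // aa_ge0.
Qed.

End Alpha.
Arguments aa {R X} alpha m y.

Fixpoint mx {R : realType} (f : nat -> R) (m : nat) : R :=
  match m with 0%N => 0 | m'.+1 => Num.max (mx f m') (f m') end.
Arguments aa1 {R X alpha} halpha v.
Arguments aa0 {R X alpha} halpha v.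
Arguments aa_ge0 {R X alpha} halpha m v.
Arguments aa_mono {R X alpha} halpha k y m z f c _.
Arguments tensorE {R X} m v.
Arguments tensor_unitE {R X} m v n.
Arguments is_tensor_unit {R X} m v.

Set Implicit Arguments. Unset Strict Implicit.

Section LDef.
Variables (R : realType) (X : normedModType R) (alpha : (nat -> X) -> R).

Definition adm (r : nat) (w : nat -> X -> R) : Prop :=
  (forall i (c : R) x y, w i (c *: x + y) = c * w i x + w i y) /\
  (forall m (z : nat -> X), \sum_(i < r) mx (fun j => `|w i (z j)|) m <= aa alpha m z).

Record Idx := MkIdx { ir : nat; iw : nat -> X -> R; iadm : adm ir iw }.

Definition rowsum (F : Idx -> nat -> R) (A : Idx) := \sum_(i < ir A) `|F A i|.
Definition Lbnd (F : Idx -> nat -> R) :=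
  (exists M, forall A, rowsum F A <= M) /\ (forall A i, (ir A <= i)%N -> F A i = 0).

Definition LT := {F : Idx -> nat -> R | Lbnd F}.

HB.instance Definition _ := gen_eqMixin LT.
HB.instance Definition _ := gen_choiceMixin LT.

Lemma LT_eq (F G : LT) : sval F = sval G -> F = G.
Proof.
case: F G => [f hf] [g hg] /= fg; subst g; congr exist; exact: Prop_irrelevance.
Qed.

Lemma Lbnd0 : Lbnd (fun _ _ => 0).
Proof.
split; last by [].
by exists 0 => A; rewrite /rowsum big1 // => i _; rewrite normr0.
Qed.

Lemma LbndD f g : Lbnd f -> Lbnd g -> Lbnd (fun A i => f A i + g A i).
Proof.
move=> [[M1 h1] z1] [[M2 h2] z2]; split; last by move=> A i hi; rewrite z1 // z2 // addr0.
exists (M1 + M2) => A; apply: le_trans (lerD (h1 A) (h2 A)).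
by rewrite /rowsum -big_split /=; apply: ler_sum => i _; apply: ler_normD.
Qed.

Lemma LbndZ (a : R) f : Lbnd f -> Lbnd (fun A i => a * f A i).
Proof.
move=> [[M h] z]; split; last by move=> A i hi; rewrite z // mulr0.
exists (`|a| * M) => A; rewrite /rowsum.
under eq_bigr do rewrite normrM.
by rewrite -mulr_sumr ler_wpM2l //; apply: h.
Qed.

Lemma LbndN f : Lbnd f -> Lbnd (fun A i => - f A i).
Proof.
move=> hf; have := LbndZ (-1) hf.
by have -> : (fun A i => -1 * f A i) = (fun A i => - f A i) by apply/funext=> A; apply/funext => i; rewrite mulN1r.
Qed.

Definition L0 : LT := exist _ _ Lbnd0.
Definition Ladd (F G : LT) : LT := exist _ _ (LbndD (proj2_sig F) (proj2_sig G)).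
Definition Lopp (F : LT) : LT := exist _ _ (LbndN (proj2_sig F)).
Definition Lscale (a : R) (F : LT) : LT := exist _ _ (LbndZ a (proj2_sig F)).

Local Ltac funs := apply: LT_eq; apply/funext => A; apply/funext => i; rewrite /=.

Lemma LaddA : associative Ladd. Proof. by move=> *; funs; rewrite addrA. Qed.
Lemma LaddC : commutative Ladd. Proof. by move=> *; funs; rewrite addrC. Qed.
Lemma Ladd0 : left_id L0 Ladd. Proof. by move=> *; funs; rewrite add0r. Qed.
Lemma LaddN : left_inverse L0 Lopp Ladd. Proof. by move=> *; funs; rewrite addNr. Qed.

HB.instance Definition _ := GRing.isZmodule.Build LT LaddA LaddC Ladd0 LaddN.

Lemma LscaleA a b (v : LT) : Lscale a (Lscale b v) = Lscale (a * b) v.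
Proof. by funs; rewrite mulrA. Qed.
Lemma Lscale1 : left_id 1 Lscale. Proof. by move=> *; funs; rewrite mul1r. Qed.
Lemma LscaleDr : right_distributive Lscale +%R.
Proof. by move=> *; funs; rewrite mulrDr. Qed.
Lemma LscaleDl (v : LT) : {morph Lscale^~ v: a b / a + b}.
Proof. by move=> *; funs; rewrite mulrDl. Qed.

HB.instance Definition _ := GRing.Zmodule_isLmodule.Build R LT LscaleA Lscale1 LscaleDr LscaleDl.

Definition rs (F : Idx -> nat -> R) (o : option Idx) := if o is Some A then rowsum F A else 0.
Definition N (F : LT) := sup (range (rs (sval F))).

Lemma rs_has (F : LT) : has_sup (range (rs (sval F))).
Proof.
have [[M hM] _] := proj2_sig F.
split; first by exists 0, None.
exists (Num.max M 0) => _ [[A|] _ <-] /=; rewrite le_max ?lexx ?orbT //.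
by rewrite hM.
Qed.

Lemma N_ub (F : LT) A : rowsum (sval F) A <= N F.
Proof. by apply: (ub_le_sup (rs_has F).2); exists (Some A). Qed.

Lemma N_ge0 (F : LT) : 0 <= N F.
Proof. by apply: (ub_le_sup (rs_has F).2); exists None. Qed.

Lemma N_le (F : LT) c : 0 <= c -> (forall A, rowsum (sval F) A <= c) -> N F <= c.
Proof. by move=> c0 h; apply: ge_sup; [exists 0, None | move=> _ [[A|] _ <-] /=; [apply: h|]]. Qed.

Lemma N_coord (F : LT) A i : `|sval F A i| <= N F.
Proof.
case: (ltnP i (ir A)) => hi; last by rewrite (proj2_sig F).2 // normr0 N_ge0.
apply: le_trans (N_ub F A); rewrite /rowsum.
rewrite (bigD1 (Ordinal hi)) //= lerDl.
by apply: sumr_ge0 => j _; apply: normr_ge0.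
Qed.

Lemma N_triangle (F G : LT) : N (F + G) <= N F + N G.
Proof.
apply: N_le; first by rewrite addr_ge0 // N_ge0.
move=> A; apply: le_trans (lerD (N_ub F A) (N_ub G A)).
by rewrite /rowsum -big_split /=; apply: ler_sum => i _; apply: ler_normD.
Qed.

Lemma N_scale_le (a : R) (F : LT) : N (a *: F) <= `|a| * N F.
Proof.
apply: N_le; first by rewrite mulr_ge0 // N_ge0.
move=> A; rewrite /rowsum /=.
under eq_bigr do rewrite normrM.
by rewrite -mulr_sumr ler_wpM2l // N_ub.
Qed.

Lemma N_scale (a : R) (F : LT) : N (a *: F) = `|a| * N F.
Proof.
apply/eqP; rewrite eq_le N_scale_le /=.
have [->|a0] := eqVneq a 0.
  by rewrite normr0 mul0r N_ge0.
have := N_scale_le a^-1 (a *: F); rewrite scalerA mulVf // scale1r => h.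
by rewrite -ler_pdivlMl ?normr_gt0 // -normrV // unitfE.
Qed.

Lemma N_eq0 (F : LT) : N F = 0 -> F = 0.
Proof.
move=> h; funs; apply/eqP; rewrite -normr_eq0 eq_le normr_ge0 andbT.
by rewrite -h; apply: N_coord.
Qed.

HB.instance Definition _ := Lmodule_isNormed.Build R LT N_triangle N_scale N_eq0.

End LDef.

Section LComp.
Variables (R : realType) (X : normedModType R) (alpha : (nat -> X) -> R).
Local Notation LT := (LT alpha).

Lemma normLE (F : LT) : `|F| = N F.
Proof. by []. Qed.

Lemma LT_complete (FF : set_system LT) : ProperFilter FF -> cauchy FF -> cvg FF.
Proof.
move=> PF /cauchy_ballP Fc.
have FFn : Filter (nbhs FF) by exact: (PF : Filter FF).
have Fb : forall e, 0 < e -> \forall x & y \near FF, `|x - y| < e.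
  move=> e e0; have := Fc e e0.
  by apply: filterS => -[x y]; rewrite -ball_normE /ball_ /= distrC.
have evc : forall A i, cvg ((fun F : LT => sval F A i) @ FF).
  move=> A i; apply: cauchy_cvg; apply/cauchy_ballP => e e0.
  rewrite near_map2.
  move: (Fb e e0); apply: filterS => -[x y] /= h.
  rewrite -ball_normE /ball_ /=.
  apply: le_lt_trans _ h; exact: (N_coord (x - y) A i).
pose lim_ A i := lim ((fun F : LT => sval F A i) @ FF).
pose g A i := if (i < ir A)%N then lim_ A i else 0.
have key : forall e, 0 < e -> \forall F \near FF, forall A,
    rowsum (fun A i => sval F A i - g A i) A <= e.
  move=> e e0; have H := nearP_dep (Fb e e0).
  apply: (filterS _ (H (PF : Filter FF) (PF : Filter FF))) => F HF A.
  have -> : rowsum (fun A i => sval F A i - g A i) A =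
      \sum_(i < ir A) `|sval F A i - lim_ A i|.
    by apply: eq_bigr => i _; rewrite /g ltn_ord.
  apply: (@cvgr_to_le _ FF PF _ (fun G : LT => \sum_(i < ir A) `|sval F A i - sval G A i|)).
    have := (@cvg_big R 'I_(ir A) +%R 0 xpredT add_continuous _ FF (index_enum 'I_(ir A)) (fun i (G : LT) => `|sval F A i - sval G A i|) (fun i => `|sval F A i - lim_ A i|) (PF : Filter FF)).
    move=> h; apply: h.
    move=> i _; apply: cvg_norm; apply: cvgB; first exact: cvg_cst.
    exact: evc.
  apply: filterS HF => G HG; apply: ltW; apply: le_lt_trans HG.
  exact: (N_ub (F - G) A).
have Lg : Lbnd g.
  split; last by move=> A i hi; rewrite /g ltnNge hi.
  have [F HF] := filter_ex (key 1 ltr01).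
  exists (N F + 1) => A; apply: le_trans (lerD (N_ub F A) (HF A)).
  rewrite /rowsum -big_split /=; apply: ler_sum => i _.
  set a := sval F A i; set b := g A i.
  have E : b = a + - (a - b) by rewrite opprB addrCA subrr addr0.
  by rewrite {1}E; apply: le_trans (ler_normD _ _) _; rewrite normrN.
pose G : LT := exist _ g Lg.
apply/cvg_ex; exists G; apply/fcvgrPdist_lt => e e0.
have e20 : 0 < e / 2 by rewrite divr_gt0.
apply: filterS (key _ e20) => F HF.
have h2 : e / 2 < e by rewrite ltr_pdivrMr // ltr_pMr // ltr1n.
apply: le_lt_trans h2; rewrite normLE; apply: N_le; first exact: ltW.
move=> A; apply: le_trans (HF A); rewrite /rowsum; apply: ler_sum => i _ /=.
by rewrite distrC.
Qed.

HB.instance Definition _ := Uniform_isComplete.Build LT LT_complete.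

End LComp.

Unset Implicit Arguments. Set Strict Implicit.

Section BMax.
Variable R : realType.
Implicit Types f : nat -> R.

Lemma bmax_ge f m j : (j < m)%N -> f j <= mx f m.
Proof.
elim: m => [//|m IH] jm /=; rewrite le_max.
case: (ltngtP j m) => [jlt|mj|->]; last by rewrite lexx orbT.
  by rewrite IH.
by move: jm; rewrite ltnS leqNgt mj.
Qed.

Lemma bmax_le f m c : 0 <= c -> (forall j, (j < m)%N -> f j <= c) -> mx f m <= c.
Proof.
move=> c0; elim: m => [|m IH] h //=.
rewrite ge_max IH ?h //.
by move=> j jm; apply: h; apply: ltn_trans jm _.
Qed.

Lemma bmax_ex f m : (0 < m)%N -> (forall k, 0 <= f k) ->
  exists2 j, (j < m)%N & mx f m = f j.
Proof.
move=> + f0; elim: m => [//|m IH] _ /=.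
case: m IH => [|m] IH.
  by exists 0%N => //=; apply/max_idPr; apply: f0.
have [j jm ->] := IH isT.
case: (leP (f j) (f m.+1)) => h.
  by exists m.+1 => //; apply/max_idPr.
exists j; first exact: ltn_trans jm _.
by move: h => /ltW /max_idPl.
Qed.

Lemma bmax_ge0 f m : 0 <= mx f m.
Proof. by elim: m => [|m IH] //=; rewrite le_max IH. Qed.

Lemma norm_max_le (a b : R) : `|Num.max a b| <= `|a| + `|b|.
Proof.
have ha : a <= `|a| + `|b| by apply: le_trans (ler_norm a) _; rewrite lerDl normr_ge0.
have hb : b <= `|a| + `|b| by apply: le_trans (ler_norm b) _; rewrite lerDr normr_ge0.
have ha' : - (`|a| + `|b|) <= a.
  by rewrite lerNl; apply: le_trans (ler_norm (- a)) _; rewrite normrN lerDl normr_ge0.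
by rewrite ler_norml ge_max ha hb le_max ha'.
Qed.

End BMax.
Arguments bmax_ge {R} f m j _.
Arguments bmax_le {R} f m c _ _.
Arguments bmax_ex {R} f m _ _.
Arguments bmax_ge0 {R} f m.
Arguments norm_max_le {R} a b.

Section Lat.
Variables (R : realType) (X : normedModType R) (alpha : (nat -> X) -> R).
Local Notation LT := (LT alpha).

Definition Lle (F G : LT) : Prop := forall A i, sval F A i <= sval G A i.

Lemma Lbnd_max (F G : LT) : Lbnd (fun A i => Num.max (sval F A i) (sval G A i)).
Proof.
have [[M1 h1] z1] := proj2_sig F; have [[M2 h2] z2] := proj2_sig G.
split; last by move=> A i hi; rewrite z1 // z2 // maxxx.
exists (M1 + M2) => A; apply: le_trans (lerD (h1 A) (h2 A)).
rewrite /rowsum -big_split /=; apply: ler_sum => i _ /=.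
exact: norm_max_le.
Qed.

Definition Ljoin (F G : LT) : LT := exist _ _ (Lbnd_max F G).

Lemma Lle_refl F : Lle F F. Proof. by move=> A i. Qed.
Lemma Lle_anti F G : Lle F G -> Lle G F -> F = G.
Proof.
move=> h1 h2; apply: LT_eq; apply/funext => A; apply/funext => i.
by apply/eqP; rewrite eq_le h1 h2.
Qed.
Lemma Lle_trans F G H : Lle F G -> Lle G H -> Lle F H.
Proof. by move=> h1 h2 A i; apply: le_trans (h1 A i) (h2 A i). Qed.
Lemma Lle_add F G H : Lle F G -> Lle (F + H) (G + H).
Proof. by move=> h A i /=; rewrite lerD2r. Qed.
Lemma Lle_scale (a : R) F G : 0 <= a -> Lle F G -> Lle (a *: F) (a *: G).
Proof. by move=> a0 h A i /=; rewrite ler_wpM2l. Qed.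
Lemma Ljoin_l F G : Lle F (Ljoin F G).
Proof. by move=> A i /=; rewrite le_max lexx. Qed.
Lemma Ljoin_r F G : Lle G (Ljoin F G).
Proof. by move=> A i /=; rewrite le_max lexx orbT. Qed.
Lemma Ljoin_least F G H : Lle F H -> Lle G H -> Lle (Ljoin F G) H.
Proof. by move=> h1 h2 A i /=; rewrite ge_max h1 h2. Qed.

Lemma rowsum_abs (F : LT) A : rowsum (sval (Ljoin F (- F))) A = rowsum (sval F) A.
Proof. by apply: eq_bigr => i _ /=; rewrite maxrN normr_id. Qed.

Lemma Lnorm_mono F G : Lle (Ljoin F (- F)) (Ljoin G (- G)) -> `|F| <= `|G|.
Proof.
move=> h; rewrite !normLE; apply: N_le; first exact: N_ge0.
move=> A; apply: le_trans (N_ub G A); rewrite /rowsum; apply: ler_sum => i _.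
by have := h A i; rewrite /= !maxrN.
Qed.

Definition LBL : banach_lattice R :=
  @BanachLattice R (LT : completeNormedModType R) Lle Ljoin Lle_refl Lle_anti
    Lle_trans Lle_add Lle_scale Ljoin_l Ljoin_r Ljoin_least Lnorm_mono.

End Lat.

Lemma mx1 (R : realType) (f : nat -> R) : 0 <= f 0%N -> mx f 1 = f 0%N.
Proof. by move=> h /=; apply/max_idPr. Qed.

Section Main.
Variables (R : realType) (X : normedModType R) (alpha : (nat -> X) -> R).
Hypothesis halpha : left_tensorial alpha.
Local Notation LT := (LT alpha).

Definition Jf (x : X) : Idx alpha -> nat -> R :=
  fun A i => if (i < ir A)%N then iw A i x else 0.

Lemma LbndJ x : Lbnd (Jf x).
Proof.
split; last by move=> A i hi; rewrite /Jf ltnNge hi.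
exists `|x| => A; have := (iadm A).2 1%N (fun _ => x).
rewrite (aa1 halpha) => h; apply: le_trans h.
rewrite /rowsum; apply: ler_sum => i _; rewrite /Jf ltn_ord.
exact: (bmax_ge (fun j => `|iw A i x|) 1 0 isT).
Qed.

Definition J (x : X) : LT := exist _ _ (LbndJ x).

Lemma J_lin (a : R) x y : J (a *: x + y) = a *: J x + J y.
Proof.
apply: LT_eq; apply/funext => A; apply/funext => i; rewrite /= /Jf.
by case: ifP => _; [exact: (iadm A).1 | rewrite mulr0 addr0].
Qed.

Lemma aa_trunc m (v : nat -> X) : aa alpha m (tensor_of m (fun i => unit_vec i) v) = aa alpha m v.
Proof.
rewrite /aa; congr alpha; rewrite !tensorE; apply/funext => n.
by case: (n < m)%N.
Qed.

Lemma aa_sublin m : sublin (aa alpha m : (nat -> X) -> R).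
Proof.
split.
  move=> x y; rewrite /aa.
  have -> : tensor_of m (fun i => unit_vec i) (x + y) =
      (fun n => tensor_of m (fun i => unit_vec i) x n + tensor_of m (fun i => unit_vec i) y n).
    apply/funext => n; rewrite /tensor_of -big_split /=.
    by apply: eq_bigr => i _; rewrite scalerDr.
  by apply: halpha.1.1.2.2.1; apply: is_tensor_unit.
move=> t x t0; rewrite /aa.
have -> : tensor_of m (fun i => unit_vec i) (t *: x) =
    (fun n => t *: tensor_of m (fun i => unit_vec i) x n).
  apply/funext => n; rewrite /tensor_of scaler_sumr /=.
  by apply: eq_bigr => i _; rewrite !scalerA mulrC.
by rewrite halpha.1.1.2.2.2 ?ger0_norm //; apply: is_tensor_unit.
Qed.

Lemma lin_sum (V : lmodType R) (f : V -> R) n (v : nat -> V) : lfun_ax f ->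
  f (\sum_(i < n) v i) = \sum_(i < n) f (v i).
Proof.
move=> hf.
have add : forall a b, f (a + b) = f a + f b by move=> a b; rewrite -[a]scale1r hf mul1r scale1r.
have f0 : f 0 = 0.
  have h := add 0 0; rewrite addr0 in h.
  by move: h; rewrite -{1}[f 0]addr0 => /addrI <-.
elim: n => [|n IH]; first by rewrite !big_ord0.
by rewrite !big_ord_recr /= add IH.
Qed.

Lemma main_eq k (y : nat -> X) (F : LT) :
  (forall A, rowsum (sval F) A = \sum_(i < ir A) mx (fun j => `|iw A i (y j)|) k.+1) ->
  N F = aa alpha k.+1 y.
Proof.
move=> hF; apply/eqP; rewrite eq_le; apply/andP; split.
  apply: N_le; first exact: (aa_ge0 halpha k.+1 y).
  by move=> A; rewrite hF; apply: (iadm A).2.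
pose ty := tensor_of k.+1 (fun i => unit_vec i) y.
have [Phi [Plin [Ple Peq]]] := @hahn_banach R (nat -> X) (aa alpha k.+1) ty (aa_sublin k.+1).
pose w i x := Phi (fun n => unit_vec i n *: x).
have wlin : forall i (c : R) x z, w i (c *: x + z) = c * w i x + w i z.
  move=> i c x z; rewrite /w -Plin; congr Phi; apply/funext => n /=.
  transitivity (c *: (unit_vec i n *: x) + unit_vec i n *: z); last by [].
  by rewrite scalerDr !scalerA mulrC.
have Padd : forall a b, Phi (a + b) = Phi a + Phi b.
  by move=> a b; rewrite -[a]scale1r Plin mul1r scale1r.
have P0 : Phi 0 = 0.
  have h := Padd 0 0; rewrite addr0 in h.
  by move: h; rewrite -{1}[Phi 0]addr0 => /addrI <-.
have w0 : forall i, w i 0 = 0.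
  move=> i; rewrite /w -P0; congr Phi; apply/funext => n.
  by rewrite scaler0.
have wZ : forall i (c : R) x, w i (c *: x) = c * w i x.
  by move=> i c x; have := wlin i c x 0; rewrite addr0 w0 addr0.
have sumw : forall (v : nat -> X), \sum_(i < k.+1) w i (v i) = aa alpha k.+1 v -> True.
  by [].
have Phit : forall (v : nat -> X),
    Phi (tensor_of k.+1 (fun i => unit_vec i) v) = \sum_(i < k.+1) w i (v i).
  move=> v; rewrite /w -(@lin_sum (nat -> X) Phi k.+1 (fun i n => unit_vec i n *: v i) Plin); congr Phi.
  by rewrite fct_sumE.
have wadm : adm alpha k.+1 w.
  split; first exact: wlin.
  move=> m z; case: m => [|m].
    by rewrite big1 ?(aa_ge0 halpha).
  have hex : forall i, exists j, (j < m.+1)%N /\ mx (fun j => `|w i (z j)|) m.+1 = `|w i (z j)|.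
    move=> i; have [j jm ->] := bmax_ex (fun j => `|w i (z j)|) m.+1 (ltn0Sn m) (fun _ => normr_ge0 _).
    by exists j.
  have [jf hjf] := choice hex.
  pose s i : R := if 0 <= w i (z (jf i)) then 1 else -1.
  pose y2 i := s i *: z (jf i).
  have E : \sum_(i < k.+1) mx (fun j => `|w i (z j)|) m.+1 = \sum_(i < k.+1) w i (y2 i).
    apply: eq_bigr => i _; rewrite (hjf i).2 /y2 wZ /s.
    case: ifP => h; first by rewrite mul1r ger0_norm.
    by rewrite mulN1r ltr0_norm // ltNge h.
  rewrite E -Phit; apply: le_trans (Ple _) _.
  rewrite aa_trunc; apply: (aa_mono halpha k.+1 y2 m.+1 z jf s).
  move=> n _; split; first exact: (hjf n).1.
  split=> //; rewrite /s; case: ifP => _; by rewrite ?normrN normr1.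
pose Astar := MkIdx wadm.
have Ey : aa alpha k.+1 y = \sum_(i < k.+1) w i (y i).
  by rewrite -Phit -/ty Peq aa_trunc.
rewrite Ey; apply: le_trans (N_ub F Astar); rewrite hF /=.
apply: ler_sum => i _; apply: le_trans (ler_norm _) _.
exact: (bmax_ge (fun j => `|w i (y j)|) k.+1 i (ltn_ord i)).
Qed.

End Main.

Lemma sup_pt (R : realType) (X : normedModType R) (alpha : (nat -> X) -> R)
  (halpha : left_tensorial alpha) (y : nat -> X) k A i : (i < ir A)%N ->
  sval (bl_sup_upto (L := LBL R X alpha) (fun j => bl_abs (L := LBL R X alpha) (J R X alpha halpha (y j))) k) A i
    = mx (fun j => `|iw A i (y j)|) k.+1.
Proof.
move=> hi; elim: k => [|k IH].
  by rewrite /= /Jf hi maxrN; symmetry; apply/max_idPr; apply: normr_ge0.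
by rewrite /= IH /Jf hi maxrN.
Qed.

Theorem theorem1p7 (R : realType) (X : completeNormedModType R)
  (alpha : (nat -> X) -> R) :
  left_tensorial alpha ->
  exists (L : banach_lattice R) (J : X -> L),
    linear_isometry J /\
    forall (k : nat) (y : nat -> X),
      `| bl_sup_upto (fun j => bl_abs (J (y j))) k |
        = alpha (fun n => \sum_(j < k.+1) unit_vec j n *: y j).
Proof.
move=> halpha; exists (LBL R X alpha), (J R X alpha halpha); split.
  split; first by move=> a x y; apply: J_lin.
  move=> x; change (N (J R X alpha halpha x) = `|x|).
  rewrite (main_eq R X alpha halpha 0 (fun _ => x)); first by rewrite (aa1 halpha).
  move=> A; apply: eq_bigr => i _; rewrite /= /Jf ltn_ord; symmetry; apply/max_idPr; apply: normr_ge0.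
move=> k y.
change (N (bl_sup_upto (L := LBL R X alpha) (fun j => bl_abs (L := LBL R X alpha) (J R X alpha halpha (y j))) k) = aa alpha k.+1 y).
apply: (main_eq R X alpha halpha) => A; apply: eq_bigr => i _.
by rewrite sup_pt // ger0_norm // bmax_ge0.
Qed.
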